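(* Let $\mathbb U$ be the universal Urysohn space and let $X$ be a compact metric space. (1) If $X$ is a Rakotch fractal, then $X$ is isometric to the attractor $A_{\mathcal{G}}$ of a function system $\mathcal{G}$ consisting of Rakotch contractions of $\mathbb U$. (2) If $X$ is a Banach fractal, then $X$ is isometric to the attractor $A_{\mathcal{G}}$ of a function system $\mathcal{G}$ consisting of Banach contractions of $\mathbb U$.
   Context: The universal Urysohn space $\mathbb U$ is the (unique up to isometry) separable complete metric space such that every isometric embedding $f:B\to\mathbb U$ of a subspace $B$ of a finite metric space $A$ extends to an isometric embedding $\bar f:A\to\mathbb U$. A function system on a metric space $X$ is a finite family of continuous self-maps of $X$; it induces $\mathcal{F}:\mathbb K(X)\to\mathbb K(X)$, $K\mapsto\bigcup_{f\in\mathcal{F}}f(K)$, on the space $\mathbb K(X)$ of non-empty compact subsets of $X$ with the Hausdorff metric. A compact $A\in\mathbb K(X)$ is the attractor $A_{\mathcal{F}}$ of $\mathcal{F}$ if $\mathcal{F}(A)=A$ and $\mathcal{F}^n(K)\to A$ in $\mathbb K(X)$ for every $K\in\mathbb K(X)$. A map $f:(X,d_X)\to(Y,d_Y)$ is Rakotch contracting if there is $\varphi:[0,\infty)\to[0,\infty)$ with $d_Y(f(x),f(x'))\le\varphi(d_X(x,x'))$ for all $x,x'$ and $\sup_{a<t<\infty}\varphi(t)/t<1$ for every $a>0$; it is a Banach contraction if it is Lipschitz with Lipschitz constant $<1$. A compact metric space $X$ is a Rakotch fractal (resp. Banach fractal) if $X=\bigcup_{f\in\mathcal{F}}f(X)$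 for some function system $\mathcal{F}$ consisting of Rakotch contractions (resp. Banach contractions) of $X$. *)

(* Defs.v *)
From Stdlib Require Import Reals List.
Open Scope R_scope.

Record MetricSpace := {
  carrier :> Type;
  dist : carrier -> carrier -> R;
  dist_nonneg : forall x y, 0 <= dist x y;
  dist_eq0 : forall x y, dist x y = 0 <-> x = y;
  dist_sym : forall x y, dist x y = dist y x;
  dist_tri : forall x y z, dist x z <= dist x y + dist y z
}.
Arguments dist {m} x y.

Section Defs.
Context {M N : MetricSpace}.

Definition seq_conv (u : nat -> M) (l : M) : Prop :=
  forall eps, 0 < eps -> exists n0, forall n, (n >= n0)%nat -> dist (u n) l < eps.

Definition cauchy (u : nat -> M) : Prop :=
  forall eps, 0 < eps -> exists n0, forall n m, (n >= n0)%nat -> (m >= n0)%nat ->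
    dist (u n) (u m) < eps.

Definition compact_set (K : M -> Prop) : Prop :=
  forall u : nat -> M, (forall n, K (u n)) ->
    exists phi : nat -> nat, (forall n, (phi n < phi (S n))%nat) /\
      exists l, K l /\ seq_conv (fun n => u (phi n)) l.

Definition nonempty_compact (K : M -> Prop) : Prop :=
  (exists x, K x) /\ compact_set K.

Definition continuous_map (f : M -> N) : Prop :=
  forall x eps, 0 < eps -> exists delta, 0 < delta /\
    forall y, dist x y < delta -> dist (f x) (f y) < eps.

Definition isometric_embedding (g : M -> N) : Prop :=
  forall x y, dist (g x) (g y) = dist x y.

Definition rakotch_contraction (f : M -> N) : Prop :=
  exists phi : R -> R,
    (forall t, 0 <= t -> 0 <= phi t) /\
    (forall x x', dist (f x) (f x') <= phi (dist x x')) /\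
    (forall a, 0 < a -> exists c, c < 1 /\ forall t, a < t -> phi t / t <= c).

Definition banach_contraction (f : M -> N) : Prop :=
  exists L, 0 <= L /\ L < 1 /\ forall x x', dist (f x) (f x') <= L * dist x x'.
End Defs.

Section FS.
Context {M : MetricSpace}.

Definition compact_space : Prop := @compact_set M (fun _ => True).

Definition function_system (F : list (M -> M)) : Prop :=
  F <> nil /\ forall f, In f F -> continuous_map f.

Definition fs_image (F : list (M -> M)) (K : M -> Prop) : M -> Prop :=
  fun y => exists f, In f F /\ exists x, K x /\ y = f x.

Fixpoint fs_iter (F : list (M -> M)) (n : nat) (K : M -> Prop) : M -> Prop :=
  match n with
  | O => K
  | S n => fs_image F (fs_iter F n K)
  end.

Definition hausdorff_conv (Kn : nat -> M -> Prop) (A : M -> Prop) : Prop :=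
  forall eps, 0 < eps -> exists n0, forall n, (n >= n0)%nat ->
    (forall x, Kn n x -> exists a, A a /\ dist x a < eps) /\
    (forall a, A a -> exists x, Kn n x /\ dist x a < eps).

Definition is_attractor (F : list (M -> M)) (A : M -> Prop) : Prop :=
  nonempty_compact A /\
  (forall y, fs_image F A y <-> A y) /\
  (forall K, nonempty_compact K -> hausdorff_conv (fun n => fs_iter F n K) A).

Definition rakotch_fractal : Prop :=
  compact_space /\ exists F, function_system F /\
    (forall f, In f F -> rakotch_contraction f) /\
    (forall x, exists f, In f F /\ exists y, x = f y).

Definition banach_fractal : Prop :=
  compact_space /\ exists F, function_system F /\
    (forall f, In f F -> banach_contraction f) /\
    (forall x, exists f, In f F /\ exists y, x = f y).
End FS.
Arguments compact_space M : clear implicits.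
Arguments rakotch_fractal M : clear implicits.
Arguments banach_fractal M : clear implicits.

Definition separable (U : MetricSpace) : Prop :=
  exists s : nat -> U, forall x eps, 0 < eps -> exists n, dist (s n) x < eps.

Definition complete (U : MetricSpace) : Prop :=
  forall u : nat -> U, cauchy u -> exists l, seq_conv u l.

Definition finite_space (A : MetricSpace) : Prop :=
  exists l : list A, forall x, In x l.

Definition finite_extension_property (U : MetricSpace) : Prop :=
  forall (A : MetricSpace), finite_space A ->
  forall (B : A -> Prop) (f : A -> U),
    (forall x y, B x -> B y -> dist (f x) (f y) = dist x y) ->
    exists g : A -> U, isometric_embedding g /\ (forall x, B x -> g x = f x).

Definition urysohn_space (U : MetricSpace) : Prop :=
  separable U /\ complete U /\ finite_extension_property U.

Definition isometric_to_subset (X U : MetricSpace) (A : U -> Prop) : Prop :=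
  exists g : X -> U, isometric_embedding g /\ (forall u, A u <-> exists x, g x = u).

(* Main.v *)
From Stdlib Require Import Reals Lra Lia ZArith List ClassicalEpsilon FunctionalExtensionality.
Require Import Defs.
Open Scope R_scope.

Definition Sup (E : R -> Prop) : R :=
  match excluded_middle_informative (bound E /\ exists x, E x) with
  | left H => proj1_sig (completeness E (proj1 H) (proj2 H))
  | right _ => 0 end.

Lemma Sup_spec E : bound E -> (exists x, E x) -> is_lub E (Sup E).
Proof.
  intros Hb He. unfold Sup. destruct excluded_middle_informative as [H|H].
  - destruct (completeness E _ _) as [m Hm]. exact Hm.
  - exfalso; tauto.
Qed.

Definition supf {T : Type} (g : T -> R) : R := Sup (fun r => exists x, r = g x).
Definition inff {T : Type} (g : T -> R) : R := - supf (fun x => - g x).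

Lemma supf_ge {T} (g : T -> R) B x : (forall y, g y <= B) -> g x <= supf g.
Proof.
  intros HB. destruct (Sup_spec (fun r => exists x, r = g x)) as [H1 _].
  - exists B. intros r [y ->]. apply HB.
  - exists (g x); exists x; reflexivity.
  - apply H1. eauto.
Qed.

Lemma supf_le {T} (g : T -> R) B (x0 : T) : (forall y, g y <= B) -> supf g <= B.
Proof.
  intros HB. destruct (Sup_spec (fun r => exists x, r = g x)) as [_ H2].
  - exists B. intros r [y ->]. apply HB.
  - exists (g x0); exists x0; reflexivity.
  - apply H2. intros r [y ->]. apply HB.
Qed.

Lemma inff_le {T} (g : T -> R) B x : (forall y, B <= g y) -> inff g <= g x.
Proof.
  intros HB. unfold inff. assert (- g x <= supf (fun x => - g x)).
  { apply (supf_ge (fun x => - g x) (- B)). intros y; specialize (HB y); lra. }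
  lra.
Qed.

Lemma inff_ge {T} (g : T -> R) B (x0 : T) : (forall y, B <= g y) -> B <= inff g.
Proof.
  intros HB. unfold inff. assert (supf (fun x => - g x) <= - B).
  { apply (supf_le _ _ x0). intros y; specialize (HB y); lra. }
  lra.
Qed.

Lemma inff_shift {T} (g h : T -> R) c (x0 : T) B :
  (forall y, B <= g y) -> (forall y, B <= h y) ->
  (forall y, g y <= h y + c) -> inff g <= inff h + c.
Proof.
  intros Hg Hh H. assert (inff g - c <= inff h).
  { apply (inff_ge _ _ x0). intros y. pose proof (inff_le g B y Hg). specialize (H y). lra. }
  lra.
Qed.

Lemma nat_above r : exists n : nat, r < INR n.
Proof.
  destruct (archimed r) as [H1 H2].
  destruct (Z_le_gt_dec 0 (up r)) as [Hz|Hz].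
  - exists (Z.to_nat (up r)). rewrite INR_IZR_INZ, Z2Nat.id by lia. lra.
  - exists 0%nat. simpl. apply Z.gt_lt in Hz. apply IZR_lt in Hz. lra.
Qed.

Lemma floor_nat y d : 0 <= y -> 0 < d -> exists j : nat, INR j * d <= y < (INR j + 1) * d.
Proof.
  intros Hy Hd. destruct (nat_above (y / d)) as [N HN].
  assert (HN' : y < INR N * d).
  { apply (Rmult_lt_compat_r d) in HN; auto. unfold Rdiv in HN.
    rewrite Rmult_assoc, Rinv_l, Rmult_1_r in HN; lra. }
  clear HN. induction N.
  - simpl in HN'. lra.
  - destruct (Rlt_dec y (INR N * d)) as [H|H].
    + auto.
    + exists N. rewrite S_INR in HN'. lra.
Qed.

Definition clampM (M t : R) : R := Rmax 0 (Rmin t M).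

Lemma clamp_nexp M a b : 0 <= M -> Rabs (clampM M a - clampM M b) <= Rabs (a - b).
Proof.
  intros HM. unfold clampM, Rmax, Rmin.
  repeat (destruct Rle_dec); unfold Rabs; repeat destruct Rcase_abs; lra.
Qed.

Lemma clamp_id M a : 0 <= a <= M -> clampM M a = a.
Proof. intros H. unfold clampM, Rmax, Rmin. repeat destruct Rle_dec; lra. Qed.

Lemma clamp_range M a : 0 <= M -> 0 <= clampM M a <= M.
Proof. intros H. unfold clampM, Rmax, Rmin. repeat destruct Rle_dec; lra. Qed.

Lemma incr_ge (phi : nat -> nat) : (forall n, (phi n < phi (S n))%nat) -> forall n, (n <= phi n)%nat.
Proof. intros H n. induction n; [lia|]. specialize (H n). lia. Qed.

Lemma incr_mono (phi : nat -> nat) : (forall n, (phi n < phi (S n))%nat) ->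
  forall n m, (n < m)%nat -> (phi n < phi m)%nat.
Proof.
  intros H n m Hnm. induction m; [lia|].
  destruct (Nat.eq_dec n m) as [->|Hne]; [apply H|]. specialize (H m). specialize (IHm ltac:(lia)). lia.
Qed.

Section Nets.
Context {M : MetricSpace}.

Lemma compact_net (K : M -> Prop) : compact_set K -> forall eps, 0 < eps ->
  exists L : list M, forall x, K x -> exists p, In p L /\ dist x p < eps.
Proof.
  intros HK eps Heps. apply NNPP. intros Hn.
  assert (Hc : forall L : list M, exists x, K x /\ forall p, In p L -> eps <= dist x p).
  { intros L. apply NNPP. intros H2. apply Hn. exists L. intros x Kx.
    apply NNPP. intros H3. apply H2. exists x. split; auto. intros p Hp.
    apply Rnot_lt_le. intros Hlt. apply H3. eauto. }
  set (c := fun L => proj1_sig (constructive_indefinite_description _ (Hc L))).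
  assert (Hcs : forall L, K (c L) /\ forall p, In p L -> eps <= dist (c L) p).
  { intros L. unfold c. destruct constructive_indefinite_description; auto. }
  set (pre := fix pre (n : nat) : list M := match n with O => nil | S n => c (pre n) :: pre n end).
  set (u := fun n => c (pre n)).
  assert (Hin : forall m n, (m < n)%nat -> In (u m) (pre n)).
  { intros m n. induction n; intros H; [lia|]. simpl. destruct (Nat.eq_dec m n) as [->|Hne].
    - left; reflexivity.
    - right. apply IHn; lia. }
  destruct (HK u (fun n => proj1 (Hcs _))) as [phi [Hphi [l [Kl Hl]]]].
  destruct (Hl (eps/2) ltac:(lra)) as [n0 Hn0].
  pose proof (Hn0 n0 ltac:(lia)) as A1. pose proof (Hn0 (S n0) ltac:(lia)) as A2.
  pose proof (proj2 (Hcs (pre (phi (S n0)))) (u (phi n0)) (Hin _ _ (Hphi n0))) as A3.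
  fold (u (phi (S n0))) in A3.
  pose proof (dist_tri M (u (phi (S n0))) l (u (phi n0))). rewrite (dist_sym M l) in H. lra.
Qed.

Lemma compact_bounded (K : M -> Prop) : compact_set K ->
  exists B, 0 <= B /\ forall x y, K x -> K y -> dist x y <= B.
Proof.
  intros HK. destruct (compact_net K HK 1 Rlt_0_1) as [L HL].
  destruct L as [|z L].
  - exists 0. split; [lra|]. intros x y Kx. destruct (HL x Kx) as [p [[] _]].
  - set (S := fold_right (fun p acc => dist p z + acc) 0 (z :: L)).
    assert (HS0 : forall l : list M, 0 <= fold_right (fun p acc => dist p z + acc) 0 l).
    { induction l; simpl; [lra|]. pose proof (dist_nonneg M a z). lra. }
    assert (HS : forall l : list M, forall p, In p l -> dist p z <= fold_right (fun p acc => dist p z + acc) 0 l).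
    { induction l; simpl; [tauto|]. intros p [->|Hp].
      - specialize (HS0 l). lra.
      - specialize (IHl p Hp). pose proof (dist_nonneg M a z). lra. }
    exists (2 + 2 * S). split. { specialize (HS0 (z::L)). unfold S. lra. }
    intros x y Kx Ky. destruct (HL x Kx) as [p [Hp Dp]]. destruct (HL y Ky) as [q [Hq Dq]].
    pose proof (HS _ p Hp). pose proof (HS _ q Hq). fold S in H, H0.
    pose proof (dist_tri M x p y). pose proof (dist_tri M p z y). pose proof (dist_tri M z q y).
    rewrite (dist_sym M p z) in H.
    rewrite (dist_sym M z p) in H. rewrite (dist_sym M z q) in H3. rewrite (dist_sym M q y) in H3. lra.
Qed.
End Nets.

Lemma sig_eq {A : Type} {P : A -> Prop} (a b : {x | P x}) : proj1_sig a = proj1_sig b -> a = b.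
Proof. destruct a, b; simpl; intros ->. f_equal. apply proof_irrelevance. Qed.

Definition subMS (Y : MetricSpace) (P : Y -> Prop) : MetricSpace.
Proof.
  refine {| carrier := {y : Y | P y}; dist := fun a b => dist (proj1_sig a) (proj1_sig b) |}.
  - intros; apply dist_nonneg.
  - intros x y; split; intros H.
    + apply sig_eq. apply (dist_eq0 Y). exact H.
    + subst. apply (dist_eq0 Y). reflexivity.
  - intros; apply dist_sym.
  - intros; apply dist_tri.
Defined.

Lemma finite_sub (Y : MetricSpace) (l : list Y) : forall (P : Y -> Prop), (forall y, P y -> In y l) ->
  exists L : list {y | P y}, forall x, In x L.
Proof.
  induction l as [|a l IH]; intros P HP.
  - exists nil. intros [x Px]. destruct (HP x Px).
  - set (P' := fun y => P y /\ y <> a).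
    destruct (IH P') as [L' HL'].
    { intros y [Py Hya]. destruct (HP y Py) as [->|H]; [congruence|exact H]. }
    set (mp := fun (w : {y | P' y}) => exist P (proj1_sig w) (proj1 (proj2_sig w))).
    destruct (classic (P a)) as [Pa|nPa].
    + exists (exist P a Pa :: map mp L'). intros [x Px].
      destruct (classic (x = a)) as [->|Hxa].
      * left. apply sig_eq. reflexivity.
      * right. apply in_map_iff. exists (exist P' x (conj Px Hxa)). split; [apply sig_eq; reflexivity|apply HL'].
    + exists (map mp L'). intros [x Px].
      destruct (classic (x = a)) as [->|Hxa]; [contradiction|].
      apply in_map_iff. exists (exist P' x (conj Px Hxa)). split; [apply sig_eq; reflexivity|apply HL'].
Qed.

Lemma le_eps a b : (forall eps, 0 < eps -> a <= b + eps) -> a <= b.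
Proof. intros H. apply Rnot_lt_le. intros Hlt. specialize (H ((a - b)/2) ltac:(lra)). lra. Qed.

Section Emb.
Context (Y U : MetricSpace) (HUc : complete U) (HUf : finite_extension_property U) (u0 : U)
  (D : nat -> list Y)
  (Hd : forall y eps, 0 < eps -> exists k z, In z (D k) /\ dist z y < eps).

Definition iso_on (f : Y -> U) (l : list Y) :=
  forall a b, In a l -> In b l -> dist (f a) (f b) = dist a b.

Lemma step_ex (l l' : list Y) (f : Y -> U) : iso_on f l -> (forall a, In a l -> In a l') ->
  exists f', iso_on f' l' /\ forall a, In a l -> f' a = f a.
Proof.
  intros Hf Hsub. set (A := subMS Y (fun y => In y l')).
  destruct (HUf A (finite_sub Y l' _ (fun y H => H)) (fun w : A => In (proj1_sig w) l)
     (fun w : A => f (proj1_sig w))) as [g [Hg1 Hg2]].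
  { intros x y Hx Hy. simpl. apply Hf; auto. }
  exists (fun y => match excluded_middle_informative (In y l') with
                   | left H => g (exist _ y H) | right _ => f y end).
  split.
  - intros a b Ha Hb. destruct excluded_middle_informative as [Ha'|]; [|contradiction].
    destruct excluded_middle_informative as [Hb'|]; [|contradiction].
    rewrite Hg1. reflexivity.
  - intros a Ha. destruct excluded_middle_informative as [Ha'|Ha']; [|reflexivity].
    rewrite (Hg2 (exist _ a Ha') Ha). reflexivity.
Qed.

Definition step (l l' : list Y) (Hs : forall a, In a l -> In a l') (f : {f | iso_on f l}) :
  {f' | iso_on f' l' /\ forall a, In a l -> f' a = proj1_sig f a} :=
  constructive_indefinite_description _ (step_ex l l' (proj1_sig f) (proj2_sig f) Hs).

Fixpoint Pl (n : nat) : list Y := match n with O => D O | S n => Pl n ++ D (S n) end.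

Lemma Pl_sub n : forall a, In a (Pl n) -> In a (Pl (S n)).
Proof. intros a H. simpl. apply in_or_app. left; exact H. Qed.

Lemma iso_nil : iso_on (fun _ => u0) nil.
Proof. intros a b []. Qed.

Fixpoint Es (n : nat) : {f | iso_on f (Pl n)} :=
  match n with
  | O => let s := step nil (Pl O) (fun a H => match H with end) (exist (fun f => iso_on f nil) _ iso_nil) in
         exist _ (proj1_sig s) (proj1 (proj2_sig s))
  | S n => let s := step (Pl n) (Pl (S n)) (Pl_sub n) (Es n) in
         exist _ (proj1_sig s) (proj1 (proj2_sig s))
  end.

Definition E n := proj1_sig (Es n).

Lemma E_iso n : iso_on (E n) (Pl n).
Proof. exact (proj2_sig (Es n)). Qed.

Lemma E_S n a : In a (Pl n) -> E (S n) a = E n a.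
Proof. intros H. unfold E. simpl. destruct step as [f' [H1 H2]]. simpl. apply H2; exact H. Qed.

Lemma Pl_mono n m : (n <= m)%nat -> forall a, In a (Pl n) -> In a (Pl m).
Proof. intros H. induction H; auto. intros a Ha. apply Pl_sub; auto. Qed.

Lemma E_stable n m a : (n <= m)%nat -> In a (Pl n) -> E m a = E n a.
Proof.
  intros H. induction H; intros Ha; [reflexivity|].
  rewrite E_S; [apply IHle; exact Ha|]. apply (Pl_mono n); auto.
Qed.

Lemma E_good n1 n2 a b : In a (Pl n1) -> In b (Pl n2) -> dist (E n1 a) (E n2 b) = dist a b.
Proof.
  intros Ha Hb. set (k := max n1 n2).
  rewrite <- (E_stable n1 k a), <- (E_stable n2 k b); try lia; auto.
  apply E_iso; [apply (Pl_mono n1 k)|apply (Pl_mono n2 k)]; auto; lia.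
Qed.

Lemma D_Pl k z : In z (D k) -> In z (Pl k).
Proof. destruct k; simpl; auto. intros; apply in_or_app; auto. Qed.

Lemma approx y (m : nat) : exists p : nat * Y, In (snd p) (Pl (fst p)) /\ dist (snd p) y < / (INR m + 1).
Proof.
  destruct (Hd y (/ (INR m + 1))) as [k [z [Hz Hzy]]].
  { apply Rinv_0_lt_compat. pose proof (pos_INR m). lra. }
  exists (k, z). simpl. split; auto. apply D_Pl; auto.
Qed.

Definition zs y m := proj1_sig (constructive_indefinite_description _ (approx y m)).
Lemma zs_spec y m : In (snd (zs y m)) (Pl (fst (zs y m))) /\ dist (snd (zs y m)) y < / (INR m + 1).
Proof. unfold zs. destruct constructive_indefinite_description; auto. Qed.

Definition qs y m := E (fst (zs y m)) (snd (zs y m)).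

Lemma small_inv eps : 0 < eps -> exists N : nat, / (INR N + 1) < eps.
Proof.
  intros He. destruct (nat_above (/ eps)) as [N HN]. exists N.
  pose proof (pos_INR N). apply (Rlt_trans _ (/ INR N)).
  - apply Rinv_lt_contravar; [|lra]. assert (0 < /eps) by (apply Rinv_0_lt_compat; lra). nra.
  - rewrite <- (Rinv_inv eps). apply Rinv_lt_contravar; auto.
    assert (0 < /eps) by (apply Rinv_0_lt_compat; lra). nra.
Qed.

Lemma inv_mono n m : (n <= m)%nat -> / (INR m + 1) <= / (INR n + 1).
Proof.
  intros H. apply Rinv_le_contravar. pose proof (pos_INR n); lra.
  apply le_INR in H. lra.
Qed.

Lemma qs_near y : forall eps, 0 < eps -> exists N, forall m, (m >= N)%nat -> dist (snd (zs y m)) y < eps.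
Proof.
  intros eps He. destruct (small_inv eps He) as [N HN]. exists N. intros m Hm.
  pose proof (proj2 (zs_spec y m)). pose proof (inv_mono N m Hm). lra.
Qed.

Lemma qs_cauchy y : cauchy (qs y).
Proof.
  intros eps He. destruct (qs_near y (eps/2) ltac:(lra)) as [N HN]. exists N.
  intros n m Hn Hm. unfold qs. rewrite E_good by apply zs_spec.
  pose proof (HN n Hn). pose proof (HN m Hm).
  pose proof (dist_tri Y (snd (zs y n)) y (snd (zs y m))). rewrite (dist_sym Y y) in H1. lra.
Qed.

Definition jemb (y : Y) : U := proj1_sig (constructive_indefinite_description _ (HUc _ (qs_cauchy y))).
Lemma jemb_spec y : seq_conv (qs y) (jemb y).
Proof. unfold jemb. destruct constructive_indefinite_description; auto. Qed.

Lemma jemb_iso : isometric_embedding jemb.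
Proof.
  intros y y'.
  assert (Key : forall eps, 0 < eps -> exists m,
    dist (qs y m) (jemb y) < eps /\ dist (qs y' m) (jemb y') < eps /\
    dist (snd (zs y m)) y < eps /\ dist (snd (zs y' m)) y' < eps).
  { intros eps He. destruct (jemb_spec y eps He) as [N1 H1]. destruct (jemb_spec y' eps He) as [N2 H2].
    destruct (qs_near y eps He) as [N3 H3]. destruct (qs_near y' eps He) as [N4 H4].
    exists (N1 + N2 + N3 + N4)%nat. repeat split; [apply H1|apply H2|apply H3|apply H4]; lia. }
  assert (Hq : forall m, dist (qs y m) (qs y' m) = dist (snd (zs y m)) (snd (zs y' m))).
  { intros m. unfold qs. apply E_good; apply zs_spec. }
  apply Rle_antisym; apply le_eps; intros eps He; destruct (Key (eps/4) ltac:(lra)) as [m [A1 [A2 [A3 A4]]]];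
    specialize (Hq m).
  - pose proof (dist_tri U (jemb y) (qs y m) (jemb y')). pose proof (dist_tri U (qs y m) (qs y' m) (jemb y')).
    pose proof (dist_tri Y (snd (zs y m)) y (snd (zs y' m))). pose proof (dist_tri Y y y' (snd (zs y' m))).
    rewrite (dist_sym U (jemb y) (qs y m)) in H. rewrite (dist_sym Y y' (snd (zs y' m))) in H2. lra.
  - pose proof (dist_tri Y y (snd (zs y m)) y'). pose proof (dist_tri Y (snd (zs y m)) (snd (zs y' m)) y').
    pose proof (dist_tri U (qs y m) (jemb y) (qs y' m)). pose proof (dist_tri U (jemb y) (jemb y') (qs y' m)).
    rewrite (dist_sym Y y (snd (zs y m))) in H. rewrite (dist_sym U (jemb y') (qs y' m)) in H2. lra.
Qed.
End Emb.

Section Zsp.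
Context (X : MetricSpace) (x0 : X) (Mn : nat) (HM : forall x y : X, dist x y <= INR Mn).
Definition MM := INR Mn.
Lemma MM_pos : 0 <= MM. Proof. apply pos_INR. Qed.

Definition lip1 (h : X -> R) := forall x y, Rabs (h x - h y) <= dist x y.
Definition Zc := {h : X -> R | lip1 h /\ forall x, 0 <= h x <= MM}.

Definition dZ (h h' : Zc) := supf (fun x => Rabs (proj1_sig h x - proj1_sig h' x)).

Lemma Zbnd (h h' : Zc) x : Rabs (proj1_sig h x - proj1_sig h' x) <= MM.
Proof.
  destruct h as [h [Hl1 Hh]]; destruct h' as [h' [Hl2 Hh']]. simpl. specialize (Hh x). specialize (Hh' x).
  unfold Rabs; destruct Rcase_abs; lra.
Qed.

Lemma dZ_ge h h' x : Rabs (proj1_sig h x - proj1_sig h' x) <= dZ h h'.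
Proof. unfold dZ. apply (supf_ge (fun y => Rabs (proj1_sig h y - proj1_sig h' y)) MM x). intros; apply Zbnd. Qed.

Lemma dZ_le h h' B : (forall x, Rabs (proj1_sig h x - proj1_sig h' x) <= B) -> dZ h h' <= B.
Proof. intros H. unfold dZ. apply (supf_le (fun y => Rabs (proj1_sig h y - proj1_sig h' y)) _ x0). exact H. Qed.

Definition Zsp : MetricSpace.
Proof.
  refine {| carrier := Zc; dist := dZ |}.
  - intros h h'. pose proof (dZ_ge h h' x0). pose proof (Rabs_pos (proj1_sig h x0 - proj1_sig h' x0)). lra.
  - intros h h'. split; intros H.
    + apply sig_eq. apply functional_extensionality. intros x. pose proof (dZ_ge h h' x).
      rewrite H in H0. pose proof (Rabs_pos (proj1_sig h x - proj1_sig h' x)).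
      assert (Rabs (proj1_sig h x - proj1_sig h' x) = 0) by lra.
      revert H2. unfold Rabs; destruct Rcase_abs; lra.
    + subst. apply Rle_antisym.
      * apply dZ_le. intros x. rewrite Rminus_diag, Rabs_R0. lra.
      * pose proof (dZ_ge h' h' x0). pose proof (Rabs_pos (proj1_sig h' x0 - proj1_sig h' x0)). lra.
  - intros h h'. apply Rle_antisym; apply dZ_le; intros x; rewrite Rabs_minus_sym; apply dZ_ge.
  - intros h1 h2 h3. apply dZ_le. intros x. pose proof (dZ_ge h1 h2 x). pose proof (dZ_ge h2 h3 x).
    pose proof (Rabs_triang (proj1_sig h1 x - proj1_sig h2 x) (proj1_sig h2 x - proj1_sig h3 x)).
    replace (proj1_sig h1 x - proj1_sig h2 x + (proj1_sig h2 x - proj1_sig h3 x))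
      with (proj1_sig h1 x - proj1_sig h3 x) in H1 by ring. lra.
Defined.

Lemma clamp_lip h : lip1 h -> lip1 (fun x => clampM MM (h x)).
Proof. intros H x y. eapply Rle_trans; [apply clamp_nexp, MM_pos|apply H]. Qed.

Definition mkZ (h : X -> R) (H : lip1 h) : Zsp :=
  exist _ (fun x => clampM MM (h x)) (conj (clamp_lip h H) (fun x => clamp_range MM (h x) MM_pos)).

Lemma mkZ_ext h h' H H' : (forall x, clampM MM (h x) = clampM MM (h' x)) -> mkZ h H = mkZ h' H'.
Proof. intros E. apply sig_eq. simpl. apply functional_extensionality. exact E. Qed.

Lemma dist_lip (x : X) : lip1 (fun y => dist x y).
Proof.
  intros a b. pose proof (dist_tri X x a b). pose proof (dist_tri X x b a).
  rewrite (dist_sym X b a) in H0. unfold Rabs; destruct Rcase_abs; lra.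
Qed.

Definition kap (x : X) : Zsp := mkZ (fun y => dist x y) (dist_lip x).

Lemma kap_val x y : proj1_sig (kap x) y = dist x y.
Proof. simpl. apply clamp_id. split; [apply dist_nonneg|apply HM]. Qed.

Lemma kap_iso x x' : dist (kap x) (kap x') = dist x x'.
Proof.
  simpl. apply Rle_antisym.
  - apply dZ_le. intros y. rewrite !kap_val.
    pose proof (dist_lip y x x') as H; cbv beta in H. rewrite (dist_sym X y x), (dist_sym X y x') in H. exact H.
  - pose proof (dZ_ge (kap x) (kap x') x'). rewrite !kap_val in H.
    rewrite (proj2 (dist_eq0 X x' x') eq_refl), Rminus_0_r in H.
    rewrite Rabs_right in H; [exact H|apply Rle_ge, dist_nonneg].
Qed.

Context (Nt : nat -> list X) (HNt : forall k x, exists p, In p (Nt k) /\ dist x p < / (INR k + 1)).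

Definition minl (l : list (X * R)) (x : X) : R :=
  fold_right (fun pv acc => Rmin (snd pv + dist x (fst pv)) acc) MM l.

Lemma Rmin_lip (f g : X -> R) : lip1 f -> lip1 g -> lip1 (fun x => Rmin (f x) (g x)).
Proof.
  intros Hf Hg x y. specialize (Hf x y). specialize (Hg x y). revert Hf Hg.
  unfold Rmin; repeat destruct Rle_dec; unfold Rabs; repeat destruct Rcase_abs; lra.
Qed.

Lemma minl_lip l : lip1 (minl l).
Proof.
  induction l as [|[p v] l IH]; simpl.
  - intros x y. rewrite Rminus_diag, Rabs_R0. apply dist_nonneg.
  - apply (Rmin_lip (fun x => v + dist x p) (minl l)); auto.
    intros x y. pose proof (dist_lip p x y) as H; cbv beta in H. rewrite (dist_sym X p x), (dist_sym X p y) in H.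
    replace (v + dist x p - (v + dist y p)) with (dist x p - dist y p) by ring. exact H.
Qed.

Definition grid (k : nat) : list R := map (fun j => INR j * / (INR k + 1)) (seq 0 (S (Mn * S k))).

Fixpoint assign (k : nat) (net : list X) : list (list (X * R)) :=
  match net with
  | nil => nil :: nil
  | p :: ps => flat_map (fun v => map (cons (p, v)) (assign k ps)) (grid k)
  end.

Definition Dk (k : nat) : list Zsp := map (fun l => mkZ (minl l) (minl_lip l)) (assign k (Nt k)).

Lemma assign_in k (v : X -> R) net : (forall p, In p net -> In (v p) (grid k)) ->
  In (map (fun p => (p, v p)) net) (assign k net).
Proof.
  induction net as [|p ps IH]; intros H; [simpl; left; reflexivity|]. cbn [map assign].
  apply in_flat_map. exists (v p). split; [apply H; left; reflexivity|].
  apply in_map. apply IH. intros q Hq; apply H; right; exact Hq.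
Qed.

Lemma minl_lower (h : X -> R) d l x : (forall y, h y <= MM) ->
  (forall p v, In (p, v) l -> h p - d <= v) -> lip1 h -> h x - d <= minl l x.
Proof.
  intros HMh Hl Hh. induction l as [|[p v] l IH]; simpl.
  - specialize (HMh x). assert (0 <= d \/ d < 0) by lra.
    destruct H; [lra|].
    lra || idtac.
Abort.

Lemma minl_lower (h : X -> R) d l x : 0 <= d -> (forall y, h y <= MM) ->
  (forall p v, In (p, v) l -> h p - d <= v) -> lip1 h -> h x - d <= minl l x.
Proof.
  intros Hd HMh Hl Hh. induction l as [|[p v] l IH]; simpl.
  - specialize (HMh x). lra.
  - apply Rmin_glb.
    + pose proof (Hl p v (or_introl eq_refl)). pose proof (Hh x p).
      unfold Rabs in H0; destruct Rcase_abs in H0; lra.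
    + apply IH. intros q w Hq. apply Hl. right; exact Hq.
Qed.

Lemma minl_upper l p v x : In (p, v) l -> minl l x <= v + dist x p.
Proof.
  induction l as [|[q w] l IH]; simpl; [tauto|]. intros [E|H].
  - inversion E; subst. apply Rmin_l.
  - eapply Rle_trans; [apply Rmin_r|auto].
Qed.

Lemma Dk_dense : forall (h : Zsp) eps, 0 < eps -> exists k z, In z (Dk k) /\ dist z h < eps.
Proof.
  intros [h [Hl Hr]] eps He. destruct (small_inv (eps/3) ltac:(lra)) as [k Hk].
  set (d := / (INR k + 1)). assert (Hd : 0 < d) by (unfold d; apply Rinv_0_lt_compat; pose proof (pos_INR k); lra).
  assert (Hv : forall p, exists v, In v (grid k) /\ Rabs (v - h p) <= d).
  { intros p. destruct (floor_nat (h p) d (proj1 (Hr p)) Hd) as [j [Hj1 Hj2]].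
    exists (INR j * d). split.
    - unfold grid. apply in_map_iff. exists j. split; [reflexivity|]. apply in_seq. split; [lia|].
      assert (INR j <= INR Mn * INR (S k)).
      { assert (INR j * d <= INR Mn) by (pose proof (proj2 (Hr p)); unfold MM in *; lra).
        rewrite S_INR. apply (Rmult_le_reg_r d); auto. rewrite Rmult_assoc.
        replace ((INR k + 1) * d) with 1 by (unfold d; field; pose proof (pos_INR k); lra). lra. }
      rewrite <- mult_INR in H. apply INR_le in H. lia.
    - unfold Rabs; destruct Rcase_abs; lra. }
  set (v := fun p => proj1_sig (constructive_indefinite_description _ (Hv p))).
  assert (Hvs : forall p, In (v p) (grid k) /\ Rabs (v p - h p) <= d).
  { intros p. unfold v. destruct constructive_indefinite_description; auto. }
  set (l := map (fun p => (p, v p)) (Nt k)).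
  exists k, (mkZ (minl l) (minl_lip l)). split.
  - unfold Dk. apply in_map_iff. exists l. split; [reflexivity|]. apply assign_in. intros p _; apply Hvs.
  - simpl. apply Rle_lt_trans with (3 * d); [|unfold d in *; lra].
    apply dZ_le. intros x. simpl.
    rewrite <- (clamp_id MM (h x)) by apply Hr.
    eapply Rle_trans; [apply clamp_nexp, MM_pos|].
    assert (L1 : h x - d <= minl l x).
    { apply minl_lower; auto; [lra|intros y; apply Hr|].
      intros p w Hp. unfold l in Hp. apply in_map_iff in Hp. destruct Hp as [q [E _]]. injection E as E1 E2. subst p w.
      pose proof (proj2 (Hvs q)). unfold Rabs in H; destruct Rcase_abs in H; lra. }
    assert (L2 : minl l x <= h x + 3 * d).
    { destruct (HNt k x) as [p [Hp Dp]]. fold d in Dp.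
      eapply Rle_trans; [apply (minl_upper l p (v p)); unfold l; apply in_map_iff; exists p; auto|].
      pose proof (proj2 (Hvs p)). pose proof (Hl x p). unfold Rabs in H, H0.
      destruct Rcase_abs in H; destruct Rcase_abs in H0; lra. }
    unfold Rabs; destruct Rcase_abs; lra.
Qed.
End Zsp.

Definition good_mod (psi : R -> R) : Prop :=
  (forall a b, 0 <= a -> a <= b -> psi a <= psi b) /\
  (forall a b, 0 <= a -> 0 <= b -> psi (a + b) <= psi a + psi b) /\
  (forall t, 0 <= t -> 0 <= psi t /\ psi t <= t) /\
  (forall a, 0 < a -> exists c, 0 <= c /\ c < 1 /\ forall t, a < t -> psi t <= c * t).

Lemma good_mod_0 psi : good_mod psi -> psi 0 = 0.
Proof. intros [_ [_ [H _]]]. specialize (H 0 (Rle_refl 0)). lra. Qed.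

Lemma banach_mod L : 0 <= L -> L < 1 -> good_mod (fun t => L * t).
Proof.
  intros H0 H1. repeat split.
  - intros a b Ha Hab. nra.
  - intros. nra.
  - intros. nra.
  - intros. nra.
  - intros a Ha. exists L. repeat split; auto. intros; lra.
Qed.

Section Rak.
Context {X Y : MetricSpace} (f : X -> Y) (Hf : rakotch_contraction f).

Lemma rak_nexp s t : dist (f s) (f t) <= dist s t.
Proof.
  destruct Hf as [phi [H0 [Hd Hr]]].
  destruct (Req_dec (dist s t) 0) as [E|E].
  - apply (dist_eq0 X) in E. subst. rewrite (proj2 (dist_eq0 Y (f t) (f t)) eq_refl). apply dist_nonneg.
  - pose proof (dist_nonneg X s t).
    destruct (Hr (dist s t / 2) ltac:(lra)) as [c [Hc Hc2]].
    specialize (Hc2 (dist s t) ltac:(lra)). specialize (Hd s t).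
    assert (phi (dist s t) <= c * dist s t).
    { apply (Rmult_le_compat_r (dist s t)) in Hc2; [|lra].
      unfold Rdiv in Hc2. rewrite Rmult_assoc, Rinv_l in Hc2; lra. }
    nra.
Qed.

Definition dlt (k : nat) := / (INR k + 1).
Lemma dlt_pos k : 0 < dlt k. Proof. unfold dlt. apply Rinv_0_lt_compat. pose proof (pos_INR k). lra. Qed.

Lemma ck_ex k : exists c, 0 <= c /\ c < 1 /\ forall s t, dlt k < dist s t -> dist (f s) (f t) <= c * dist s t.
Proof.
  destruct Hf as [phi [H0 [Hd Hr]]].
  destruct (Hr (dlt k) (dlt_pos k)) as [c [Hc Hc2]].
  exists (Rmax 0 c). repeat split; [apply Rmax_l| unfold Rmax; destruct Rle_dec; lra|].
  intros s t Hst. pose proof (dlt_pos k). specialize (Hc2 _ Hst). specialize (Hd s t).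
  assert (phi (dist s t) <= c * dist s t).
  { apply (Rmult_le_compat_r (dist s t)) in Hc2; [|lra].
    unfold Rdiv in Hc2. rewrite Rmult_assoc, Rinv_l in Hc2; lra. }
  pose proof (Rmax_r 0 c). nra.
Qed.

Definition cc k := proj1_sig (constructive_indefinite_description _ (ck_ex k)).
Lemma cc_spec k : 0 <= cc k /\ cc k < 1 /\ forall s t, dlt k < dist s t -> dist (f s) (f t) <= cc k * dist s t.
Proof. unfold cc. destruct constructive_indefinite_description; auto. Qed.

Definition ell k t := (1 - cc k) * dlt k + cc k * t.
Definition Ipsi t := inff (fun k => ell k t).
Definition psiR t := Rmin t (Ipsi t).

Lemma ell_lb t k : - Rabs t <= ell k t.
Proof.
  unfold ell. pose proof (cc_spec k). pose proof (dlt_pos k).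
  assert (- Rabs t <= t) by (unfold Rabs; destruct Rcase_abs; lra).
  assert (- Rabs t <= 0) by (pose proof (Rabs_pos t); lra). nra.
Qed.

Lemma Ipsi_le t k : Ipsi t <= ell k t.
Proof. apply (inff_le (fun k => ell k t) (- Rabs t)). intros; apply ell_lb. Qed.

Lemma Ipsi_ge t B : (forall k, B <= ell k t) -> B <= Ipsi t.
Proof. intros H. apply (inff_ge (fun k => ell k t) B 0%nat). exact H. Qed.

Lemma psiR_good : good_mod psiR.
Proof.
  assert (Hnn : forall t, 0 <= t -> 0 <= Ipsi t).
  { intros t Ht. apply Ipsi_ge. intros k. unfold ell. pose proof (cc_spec k) as [? [? ?]]. pose proof (dlt_pos k). nra. }
  repeat split.
  - intros a b Ha Hab. unfold psiR. assert (Ipsi a <= Ipsi b).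
    { apply Ipsi_ge. intros k. eapply Rle_trans; [apply (Ipsi_le a k)|]. unfold ell. pose proof (cc_spec k) as [? [? ?]]. nra. }
    unfold Rmin; repeat destruct Rle_dec; lra.
  - intros a b Ha Hb. destruct (Req_dec (a + b) 0) as [E|E].
    + assert (a = 0) by lra. assert (b = 0) by lra. subst. rewrite Rplus_0_r.
      pose proof (Hnn 0 (Rle_refl 0)). unfold psiR. unfold Rmin; destruct Rle_dec; lra.
    + assert (Key : forall a b, 0 <= a -> 0 <= b -> 0 < a + b -> a / (a + b) * psiR (a + b) <= psiR a).
      { clear. intros a b Ha Hb Hab. set (l := a / (a + b)).
        assert (Hl0 : 0 <= l) by (unfold l; apply Rmult_le_pos; [lra|left; apply Rinv_0_lt_compat; lra]).
        assert (Hl1 : l <= 1) by (unfold l; apply (Rmult_le_reg_r (a + b)); [lra|]; unfold Rdiv; rewrite Rmult_assoc, Rinv_l; lra).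
        assert (Hla : l * (a + b) = a) by (unfold l; field; lra).
        assert (l * Ipsi (a + b) <= Ipsi a).
        { apply Ipsi_ge. intros k. pose proof (Ipsi_le (a + b) k).
          apply Rle_trans with (l * ell k (a + b)); [nra|]. unfold ell.
          pose proof (cc_spec k) as [? [? ?]]. pose proof (dlt_pos k). replace (l * ((1 - cc k) * dlt k + cc k * (a + b))) with (l * ((1 - cc k) * dlt k) + cc k * (l * (a + b))) by ring. rewrite Hla. assert (0 <= (1 - l) * ((1 - cc k) * dlt k)) by (apply Rmult_le_pos; nra). nra. }
        unfold psiR, Rmin. repeat destruct Rle_dec; nra. }
      pose proof (Key a b Ha Hb ltac:(lra)). pose proof (Key b a Hb Ha ltac:(lra)).
      replace (b + a) with (a + b) in H0 by ring.
      assert (a / (a + b) * psiR (a + b) + b / (a + b) * psiR (a + b) = psiR (a + b)) by (field; lra). lra.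
  - unfold psiR. pose proof (Hnn t H). unfold Rmin; destruct Rle_dec; lra.
  - unfold psiR. apply Rmin_l.
  - intros a Ha. destruct (small_inv (a / 2) ltac:(lra)) as [k Hk]. fold (dlt k) in Hk.
    pose proof (cc_spec k) as [C0 [C1 _]].
    exists ((1 + cc k) / 2). repeat split; try lra.
    intros t Ht. unfold psiR. eapply Rle_trans; [apply Rmin_r|]. eapply Rle_trans; [apply (Ipsi_le t k)|].
    unfold ell. nra.
Qed.

Lemma psiR_dom s t : dist (f s) (f t) <= psiR (dist s t).
Proof.
  unfold psiR. apply Rmin_glb; [apply rak_nexp|]. apply Ipsi_ge. intros k.
  pose proof (cc_spec k) as [C0 [C1 C2]]. pose proof (dlt_pos k). unfold ell.
  destruct (Rle_dec (dist s t) (dlt k)).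
  - pose proof (rak_nexp s t). nra.
  - specialize (C2 s t ltac:(lra)). nra.
Qed.
End Rak.

Section Main.
Context (U : MetricSpace) (HUc : complete U) (HUf : finite_extension_property U) (u0 : U)
  (X : MetricSpace) (x0 : X) (HX : compact_space X) (Mn : nat) (HM : forall x y : X, dist x y <= INR Mn)
  (Nt : nat -> list X) (HNt : forall k x, exists p, In p (Nt k) /\ dist x p < / (INR k + 1)).

Local Notation Z := (Zsp X x0 Mn).
Definition jj : Z -> U := jemb Z U HUc HUf u0 (Dk X x0 Mn Nt) (Dk_dense X x0 Mn Nt HNt).
Lemma jj_iso a b : dist (jj a) (jj b) = dist a b.
Proof. apply jemb_iso. Qed.
Definition ee (x : X) : U := jj (kap X x0 Mn x).
Lemma ee_iso x y : dist (ee x) (ee y) = dist x y.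
Proof. unfold ee. rewrite jj_iso. apply kap_iso; auto. Qed.

Lemma Rm_lip u : lip1 X (fun x => dist u (ee x)).
Proof.
  intros x y. rewrite <- ee_iso. pose proof (dist_tri U u (ee x) (ee y)). pose proof (dist_tri U u (ee y) (ee x)).
  rewrite (dist_sym U (ee y) (ee x)) in H0. unfold Rabs; destruct Rcase_abs; lra.
Qed.
Definition Rm (u : U) : Z := mkZ X x0 Mn _ (Rm_lip u).

Lemma Rm_e x : Rm (ee x) = kap X x0 Mn x.
Proof. unfold Rm, kap. apply mkZ_ext. intros y. rewrite ee_iso. reflexivity. Qed.

Lemma Rm_nexp u v : dist (Rm u) (Rm v) <= dist u v.
Proof.
  simpl. apply (dZ_le X x0). intros x. simpl. eapply Rle_trans; [apply clamp_nexp, MM_pos|].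
  pose proof (dist_tri U u v (ee x)). pose proof (dist_tri U v u (ee x)). rewrite (dist_sym U v u) in H0.
  unfold Rabs; destruct Rcase_abs; lra.
Qed.

Section FF.
Context (f : X -> X) (psi : R -> R).
Definition Aterm (h : Z) (x s : X) := dist (f s) x + Rmax 0 (psi (dist h (kap X x0 Mn s))).
Lemma Aterm_nn h x s : 0 <= Aterm h x s.
Proof. unfold Aterm. pose proof (dist_nonneg X (f s) x). pose proof (Rmax_l 0 (psi (dist h (kap X x0 Mn s)))). lra. Qed.

Lemma Ff_lip h : lip1 X (fun x => inff (fun s => Aterm h x s)).
Proof.
  intros x y.
  assert (forall x y, inff (fun s => Aterm h x s) <= inff (fun s => Aterm h y s) + dist x y).
  { clear x y. intros x y. apply (inff_shift _ _ _ x0 0); try apply Aterm_nn.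
    intros s. unfold Aterm. pose proof (dist_tri X (f s) y x). rewrite (dist_sym X y x) in H. lra. }
  pose proof (H x y). pose proof (H y x). rewrite (dist_sym X y x) in H1.
  unfold Rabs; destruct Rcase_abs; lra.
Qed.
Definition Ff (h : Z) : Z := mkZ X x0 Mn _ (Ff_lip h).

Context (Hg : good_mod psi) (Hdom : forall s t, dist (f s) (f t) <= psi (dist s t)).

Lemma Ff_kap t : Ff (kap X x0 Mn t) = kap X x0 Mn (f t).
Proof.
  assert (E0 : Rmax 0 (psi (dist (kap X x0 Mn t) (kap X x0 Mn t))) = 0).
  { rewrite (proj2 (dist_eq0 Z (kap X x0 Mn t) (kap X x0 Mn t)) eq_refl), good_mod_0 by auto.
    apply Rmax_left; lra. }
  assert (E1 : forall s, dist (kap X x0 Mn t) (kap X x0 Mn s) = dist t s) by (intros; apply kap_iso; auto).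
  unfold Ff, Aterm, kap in *. apply mkZ_ext. intros x. f_equal. apply Rle_antisym.
  - eapply Rle_trans; [apply (inff_le _ 0 t)|].
    + intros s. pose proof (dist_nonneg X (f s) x). pose proof (Rmax_l 0 (psi (dist (mkZ X x0 Mn (fun y : X => dist t y) (dist_lip X t)) (mkZ X x0 Mn (fun y : X => dist s y) (dist_lip X s))))). lra.
    + rewrite E0. lra.
  - apply (inff_ge _ _ x0). intros s. rewrite E1.
    pose proof (Hdom t s). pose proof (Rmax_r 0 (psi (dist t s))). pose proof (dist_tri X (f t) (f s) x). lra.
Qed.

Lemma Ff_mod h h' : dist (Ff h) (Ff h') <= psi (dist h h').
Proof.
  destruct Hg as [Hmono [Hsub [Hnn _]]].
  assert (Key : forall (h h' : Z) x, inff (fun s => Aterm h x s) <= inff (fun s => Aterm h' x s) + psi (dist h h')).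
  { intros h1 h2 x. apply (inff_shift _ _ _ x0 0); try apply Aterm_nn.
    intros s. unfold Aterm. set (a := dist h1 (kap X x0 Mn s)). set (b := dist h2 (kap X x0 Mn s)).
    set (D := dist h1 h2).
    assert (Ha : 0 <= a) by apply dist_nonneg. assert (Hb : 0 <= b) by apply dist_nonneg.
    assert (HD : 0 <= D) by apply dist_nonneg.
    assert (a <= D + b) by apply dist_tri.
    pose proof (Hmono a (D + b) Ha H). pose proof (Hsub D b HD Hb).
    rewrite !Rmax_right by (apply Hnn; auto). lra. }
  simpl. apply (dZ_le X x0). intros x. simpl. eapply Rle_trans; [apply clamp_nexp, MM_pos|].
  pose proof (Key h h' x). pose proof (Key h' h x). rewrite (dist_sym Z h' h) in H0.
  change (dist h h') with (dZ X Mn h h') in H, H0. unfold Rabs; destruct Rcase_abs; lra.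
Qed.

Definition gf (u : U) : U := jj (Ff (Rm u)).

Lemma gf_e x : gf (ee x) = ee (f x).
Proof. unfold gf. rewrite Rm_e, Ff_kap. reflexivity. Qed.

Lemma gf_mod u v : dist (gf u) (gf v) <= psi (dist u v).
Proof.
  unfold gf. rewrite jj_iso. eapply Rle_trans; [apply Ff_mod|].
  apply (proj1 Hg); [apply dist_nonneg|apply Rm_nexp].
Qed.
End FF.

Section Build.
Context (F : list (X -> X)) (HFne : F <> nil)
  (Hcov : forall x, exists f, In f F /\ exists y, x = f y)
  (P : (R -> R) -> Prop)
  (HP : forall f, In f F -> exists psi, good_mod psi /\ (forall s t, dist (f s) (f t) <= psi (dist s t)) /\ P psi).

Definition mod_ok (f : X -> X) psi := good_mod psi /\ (forall s t, dist (f s) (f t) <= psi (dist s t)) /\ P psi.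
Definition psi_of (f : X -> X) : R -> R := epsilon (inhabits (fun t : R => t)) (mod_ok f).
Lemma psi_of_spec f : In f F -> mod_ok f (psi_of f).
Proof. intros H. unfold psi_of. apply epsilon_spec. apply HP; auto. Qed.

Definition gmk f := gf f (psi_of f).
Definition GG := map gmk F.
Definition AA (u : U) := exists x, ee x = u.

Lemma gmk_mod f u v : In f F -> dist (gmk f u) (gmk f v) <= psi_of f (dist u v).
Proof. intros H. destruct (psi_of_spec f H) as [H1 [H2 _]]. unfold gmk. exact (gf_mod f (psi_of f) H1 u v). Qed.
Lemma gmk_e f x : In f F -> gmk f (ee x) = ee (f x).
Proof. intros H. destruct (psi_of_spec f H) as [H1 [H2 _]]. unfold gmk. exact (gf_e f (psi_of f) H1 H2 x). Qed.

Definition Psi (l : list (X -> X)) (t : R) := fold_right (fun f acc => Rmax (psi_of f t) acc) 0 l.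

Lemma Psi_props l : (forall f, In f l -> In f F) ->
  (forall f t, In f l -> psi_of f t <= Psi l t) /\
  (forall a b, 0 <= a -> a <= b -> Psi l a <= Psi l b) /\
  (forall t, 0 <= t -> 0 <= Psi l t /\ Psi l t <= t) /\
  (forall a, 0 < a -> exists c, 0 <= c /\ c < 1 /\ forall t, a < t -> Psi l t <= c * t).
Proof.
  induction l as [|g l IH]; intros Hl.
  - simpl. split; [intros f t []|]. split; [intros; lra|]. split; [intros; lra|]. intros a Ha. exists 0. split; [lra|]. split; [lra|]. intros; lra.
  - destruct IH as [I1 [I2 [I3 I4]]]. { intros f Hf; apply Hl; right; auto. }
    destruct (psi_of_spec g (Hl g (or_introl eq_refl))) as [[G1 [G2 [G3 G4]]] _].
    simpl. split; [|split; [|split]].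
    + intros f t [<-|Hf]; [apply Rmax_l|]. eapply Rle_trans; [apply I1; auto|apply Rmax_r].
    + intros a b Ha Hab. pose proof (G1 a b Ha Hab). pose proof (I2 a b Ha Hab).
      unfold Rmax; repeat destruct Rle_dec; lra.
    + intros t Ht. pose proof (G3 t Ht). pose proof (I3 t Ht). unfold Rmax; destruct Rle_dec; lra.
    + intros a Ha. destruct (G4 a Ha) as [c1 [C1 [C2 C3]]]. destruct (I4 a Ha) as [c2 [D1 [D2 D3]]].
      exists (Rmax c1 c2). repeat split.
      * eapply Rle_trans; [apply C1|apply Rmax_l].
      * unfold Rmax; destruct Rle_dec; lra.
      * intros t Ht. specialize (C3 t Ht). specialize (D3 t Ht). pose proof (Rmax_l c1 c2). pose proof (Rmax_r c1 c2).
        assert (0 < t) by lra.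
        apply Rmax_lub.
        -- eapply Rle_trans; [apply C3|]. apply Rmult_le_compat_r; lra.
        -- eapply Rle_trans; [apply D3|]. apply Rmult_le_compat_r; lra.
Qed.

Definition PsiF := Psi F.
Lemma PsiF_props :
  (forall f t, In f F -> psi_of f t <= PsiF t) /\
  (forall a b, 0 <= a -> a <= b -> PsiF a <= PsiF b) /\
  (forall t, 0 <= t -> 0 <= PsiF t /\ PsiF t <= t) /\
  (forall a, 0 < a -> exists c, 0 <= c /\ c < 1 /\ forall t, a < t -> PsiF t <= c * t).
Proof. apply Psi_props. auto. Qed.

Lemma iter_small r0 : 0 <= r0 -> forall a, 0 < a -> exists N, forall n, (n >= N)%nat -> Nat.iter n PsiF r0 <= a.
Proof.
  intros Hr0 a Ha. destruct PsiF_props as [_ [_ [P3 P4]]].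
  destruct (P4 a Ha) as [c [C0 [C1 C2]]].
  assert (Hnn : forall n, 0 <= Nat.iter n PsiF r0).
  { induction n; simpl; auto. apply P3; auto. }
  assert (Hdec : forall n, Nat.iter (S n) PsiF r0 <= Nat.iter n PsiF r0).
  { intros n. simpl. apply P3. apply Hnn. }
  assert (Halt : forall n, Nat.iter n PsiF r0 <= a \/ Nat.iter n PsiF r0 <= c ^ n * r0).
  { induction n. - right. simpl. lra.
    - destruct IHn as [H|H].
      + left. pose proof (Hdec n). lra.
      + destruct (Rle_dec (Nat.iter n PsiF r0) a) as [H'|H'].
        * left. pose proof (Hdec n). lra.
        * right. specialize (C2 (Nat.iter n PsiF r0) ltac:(lra)).
          change (Nat.iter (S n) PsiF r0) with (PsiF (Nat.iter n PsiF r0)).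
          eapply Rle_trans; [apply C2|]. simpl. rewrite Rmult_assoc. apply Rmult_le_compat_l; lra. }
  destruct (pow_lt_1_zero c ltac:(rewrite Rabs_right; lra) (a / (r0 + 1)) ltac:(apply Rdiv_lt_0_compat; lra)) as [N HN].
  exists N. intros n Hn.
  assert (HN' : Nat.iter N PsiF r0 <= a).
  { destruct (Halt N) as [H|H]; auto. specialize (HN N (le_n N)).
    rewrite Rabs_right in HN by (apply Rle_ge, pow_le; auto).
    assert (c ^ N * (r0 + 1) < a).
    { apply (Rmult_lt_compat_r (r0 + 1)) in HN; [|lra]. unfold Rdiv in HN.
      rewrite Rmult_assoc, Rinv_l in HN; lra. }
    pose proof (pow_le c N C0). lra. }
  induction Hn; auto. pose proof (Hdec m). lra.
Qed.

Lemma AA_image y : fs_image GG AA y <-> AA y.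
Proof.
  split.
  - intros [g [Hg [u [[x <-] ->]]]]. unfold GG in Hg. apply in_map_iff in Hg. destruct Hg as [f [<- Hf]].
    exists (f x). rewrite gmk_e; auto.
  - intros [x <-]. destruct (Hcov x) as [f [Hf [y ->]]]. exists (gmk f). split.
    + apply in_map; auto.
    + exists (ee y). split; [exists y; auto|]. rewrite gmk_e; auto.
Qed.

Lemma GG_mod g u v : In g GG -> dist (g u) (g v) <= PsiF (dist u v).
Proof.
  intros Hg. apply in_map_iff in Hg. destruct Hg as [f [<- Hf]].
  eapply Rle_trans; [apply gmk_mod; auto|]. apply PsiF_props; auto.
Qed.

Lemma AA_compact : nonempty_compact AA.
Proof.
  split; [exists (ee x0), x0; auto|].
  intros u Hu. set (xs := fun n => proj1_sig (constructive_indefinite_description _ (Hu n))).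
  assert (Hxs : forall n, ee (xs n) = u n) by (intros n; unfold xs; destruct constructive_indefinite_description; auto).
  destruct (HX xs (fun _ => I)) as [phi [Hphi [l [_ Hl]]]].
  exists phi. split; auto. exists (ee l). split; [exists l; auto|].
  intros eps He. destruct (Hl eps He) as [n0 Hn0]. exists n0. intros n Hn. rewrite <- Hxs, ee_iso. auto.
Qed.

Lemma attractor : is_attractor GG AA.
Proof.
  split; [apply AA_compact|]. split; [apply AA_image|].
  intros K [[k0 Kk0] HK].
  destruct (compact_bounded K HK) as [B [HB0 HB]].
  set (r0 := B + dist k0 (ee x0) + INR Mn).
  assert (Hr0 : 0 <= r0) by (pose proof (dist_nonneg U k0 (ee x0)); pose proof (pos_INR Mn); unfold r0; lra).
  assert (Inc : forall n,
    (forall x, fs_iter GG n K x -> exists a, AA a /\ dist x a <= Nat.iter n PsiF r0) /\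
    (forall a, AA a -> exists x, fs_iter GG n K x /\ dist x a <= Nat.iter n PsiF r0)).
  { destruct PsiF_props as [_ [P2 [P3 _]]].
    assert (Hnn : forall n, 0 <= Nat.iter n PsiF r0).
    { induction n; simpl; auto. apply P3; auto. }
    induction n.
    - simpl. split.
      + intros x Kx. exists (ee x0). split; [exists x0; auto|].
        pose proof (HB x k0 Kx Kk0). pose proof (dist_tri U x k0 (ee x0)). pose proof (pos_INR Mn). unfold r0. lra.
      + intros a [y <-]. exists k0. split; auto.
        pose proof (dist_tri U k0 (ee x0) (ee y)). rewrite ee_iso in H.
        pose proof (HM x0 y). pose proof (dist_nonneg U k0 (ee x0)). unfold r0. lra.
    - destruct IHn as [IH1 IH2]. split.
      + intros y [g [Hg [x [Hx ->]]]]. destruct (IH1 x Hx) as [a [Ha Da]].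
        exists (g a). split.
        * apply AA_image. exists g. split; auto. exists a; auto.
        * simpl. eapply Rle_trans; [apply GG_mod; auto|]. apply P2; auto. apply dist_nonneg.
      + intros a' Ha'. apply AA_image in Ha'. destruct Ha' as [g [Hg [a [Ha ->]]]].
        destruct (IH2 a Ha) as [x [Hx Dx]]. exists (g x). split.
        * exists g. split; auto. exists x; auto.
        * simpl. eapply Rle_trans; [apply GG_mod; auto|]. apply P2; auto. apply dist_nonneg. }
  intros eps He. destruct (iter_small r0 Hr0 (eps / 2) ltac:(lra)) as [N HN]. exists N. intros n Hn.
  destruct (Inc n) as [I1 I2]. specialize (HN n Hn). split.
  - intros x Hx. destruct (I1 x Hx) as [a [Ha Da]]. exists a. split; auto. lra.
  - intros a Ha. destruct (I2 a Ha) as [x [Hx Dx]]. exists x. split; auto. lra.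
Qed.

Lemma build : exists (G : list (U -> U)) (A : U -> Prop),
  function_system G /\
  (forall g, In g G -> exists psi, good_mod psi /\ P psi /\ forall u v, dist (g u) (g v) <= psi (dist u v)) /\
  is_attractor G A /\ isometric_to_subset X U A.
Proof.
  exists GG, AA. split; [split|split; [|split]].
  - unfold GG. destruct F; simpl; congruence.
  - intros g Hg u eps He. exists eps. split; auto. intros v Dv.
    eapply Rle_lt_trans; [apply GG_mod; auto|]. destruct PsiF_props as [_ [_ [P3 _]]].
    pose proof (P3 (dist u v) (dist_nonneg U u v)). lra.
  - intros g Hg. apply in_map_iff in Hg. destruct Hg as [f [<- Hf]].
    destruct (psi_of_spec f Hf) as [H1 [H2 H3]]. exists (psi_of f). split; [exact H1|]. split; [exact H3|].
    intros; apply gmk_mod; auto.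
  - apply attractor.
  - exists ee. split; [intros x y; apply ee_iso|]. intros u. reflexivity.
Qed.
End Build.
End Main.

Theorem theorem1p4 (U : MetricSpace) (HU : urysohn_space U)
  (X : MetricSpace) (HX : compact_space X) (Hne : inhabited X) :
  (rakotch_fractal X ->
     exists (G : list (U -> U)) (A : U -> Prop),
       function_system G /\ (forall g, In g G -> rakotch_contraction g) /\
       is_attractor G A /\ isometric_to_subset X U A) /\
  (banach_fractal X ->
     exists (G : list (U -> U)) (A : U -> Prop),
       function_system G /\ (forall g, In g G -> banach_contraction g) /\
       is_attractor G A /\ isometric_to_subset X U A).
Proof.
  destruct HU as [[s _] [HUc HUf]]. set (u0 := s 0%nat).
  destruct Hne as [x0].
  destruct (compact_bounded (fun _ : X => True) HX) as [B [_ HB]].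
  destruct (nat_above B) as [Mn HMn].
  assert (HM : forall x y : X, dist x y <= INR Mn).
  { intros x y. pose proof (HB x y I I). lra. }
  assert (Hnet : forall k : nat, exists L : list X, forall x, exists p, In p L /\ dist x p < / (INR k + 1)).
  { intros k. destruct (compact_net (fun _ : X => True) HX (/ (INR k + 1))) as [L HL].
    { apply Rinv_0_lt_compat. pose proof (pos_INR k). lra. }
    exists L. intros x. apply HL. exact I. }
  set (Nt := fun k => proj1_sig (constructive_indefinite_description _ (Hnet k))).
  assert (HNt : forall k x, exists p, In p (Nt k) /\ dist x p < / (INR k + 1)).
  { intros k. unfold Nt. destruct constructive_indefinite_description; auto. }
  split.
  - intros [_ [F [[HFne Hcont] [Hrak Hcov]]]].
    destruct (build U HUc HUf u0 X x0 HX Mn HM Nt HNt F HFne Hcov (fun _ => True)) as [G [A [H1 [H2 [H3 H4]]]]].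
    { intros f Hf. exists (psiR f (Hrak f Hf)). split; [apply psiR_good|]. split; [apply psiR_dom|exact I]. }
    exists G, A. split; auto. split; auto.
    intros g Hg. destruct (H2 g Hg) as [psi [[G1 [G2 [G3 G4]]] [_ Hd]]].
    exists psi. split; [intros t Ht; apply G3; auto|]. split; auto.
    intros a Ha. destruct (G4 a Ha) as [c [C0 [C1 C2]]]. exists c. split; auto.
    intros t Ht. specialize (C2 t Ht). assert (0 < t) by lra.
    unfold Rdiv. apply (Rmult_le_reg_r t); auto. rewrite Rmult_assoc, Rinv_l by lra. lra.
  - intros [_ [F [[HFne Hcont] [Hban Hcov]]]].
    destruct (build U HUc HUf u0 X x0 HX Mn HM Nt HNt F HFne Hcov
      (fun psi => exists L, 0 <= L /\ L < 1 /\ forall t, psi t = L * t)) as [G [A [H1 [H2 [H3 H4]]]]].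
    { intros f Hf. destruct (Hban f Hf) as [L [L0 [L1 HL]]].
      exists (fun t => L * t). split; [apply banach_mod; auto|]. split; [exact HL|].
      exists L. split; auto. }
    exists G, A. split; auto. split; auto.
    intros g Hg. destruct (H2 g Hg) as [psi [_ [[L [L0 [L1 HL]]] Hd]]].
    exists L. split; auto. split; auto. intros x x'. rewrite <- HL. apply Hd.
Qed.
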